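(* Let $\hat\pi=(\hat\pi_h)_{h=1}^H$ be any chunking policy and $\sigma>0$. Then the smoothed policy $\hat\pi_\sigma$ is $\gamma_{\mathrm{TVC}}$-TVC with $\gamma_{\mathrm{TVC}}(u)=\dfrac{u\sqrt{2\tau_o-1}}{2\sigma}$, i.e. for all $h$ and all $o,o'\in\mathcal{O}$, $\mathrm{TV}(\hat\pi_{\sigma,h}(o),\hat\pi_{\sigma,h}(o'))\le \frac{\sqrt{2\tau_o-1}}{2\sigma}\,d_{\mathrm{traj}}(o,o')$.
   Context: Let $\mathcal{O}=(\mathbb{R}^{d_x})^{\tau_o}\times(\mathbb{R}^{d_u})^{\tau_o-1}$ be the space of observation chunks $o=(x_{1:\tau_o},u_{1:\tau_o-1})$, identified with a Euclidean space, and $\mathcal{A}$ a Polish space of composite actions. A chunking policy is a sequence of probability kernels $\hat\pi_h:\mathcal{O}\to\Delta(\mathcal{A})$, $h=1,\dots,H$. The smoothed policy $\hat\pi_\sigma$ has $\hat\pi_{\sigma,h}(o)$ equal to the law of $a\sim\hat\pi_h(\tilde o)$ where $\tilde o\sim\mathcal{N}(o,\sigma^2I)$. For $o,o'\in\mathcal{O}$, $d_{\mathrm{traj}}(o,o')=\max_k\|x_k-x'_k\|\vee\max_k\|u_k-u'_k\|$ (Euclidean norms). $\mathrm{TV}$ is total variation distance. *)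

(* Defs.v *)
From HB Require Import structures.
From mathcomp Require Import all_boot all_order all_algebra.
From mathcomp Require Import all_classical all_reals all_analysis.
Set Implicit Arguments. Unset Strict Implicit. Unset Printing Implicit Defensive.
Import Order.TTheory GRing.Theory Num.Theory.
Local Open Scope classical_set_scope.
Local Open Scope ring_scope.

Section defs.
Context {R : realType}.

(** Gaussian expectation on R^n: E[f(m + s Z)], Z ~ N(0, I_n), computed as
    the iterated integral over the n independent coordinates, each
    distributed as the 1-d normal law N(m_i, s^2) (normal_prob m_i s). *)
Fixpoint gauss_int (s : R) (n : nat) :
    n.-tuple R -> (n.-tuple R -> \bar R) -> \bar R :=
  match n with
  | 0 => fun _ f => f [tuple]
  | n'.+1 => fun m f =>
      (\int[normal_prob (thead m) s]_y
         gauss_int s (behead_tuple m) (fun t => f (cons_tuple y t)))%E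
  end.

Fixpoint gauss_int_blocks (s : R) (d n : nat) :
    n.-tuple (d.-tuple R) -> (n.-tuple (d.-tuple R) -> \bar R) -> \bar R :=
  match n with
  | 0 => fun _ f => f [tuple]
  | n'.+1 => fun m f =>
      gauss_int s (thead m) (fun y =>
         gauss_int_blocks s (behead_tuple m) (fun t => f (cons_tuple y t)))
  end.

(** Observation chunks o = (x_{1:tau}, u_{1:tau-1}),
    x_k in R^dx, u_k in R^du. *)
Definition obs (dx du tau : nat) : Type :=
  (tau.-tuple (dx.-tuple R) * (tau.-1).-tuple (du.-tuple R))%type.

(** Expectation of f(o~) where o~ ~ N(o, s^2 I) on the observation space
    (all coordinates independent with variance s^2). *)
Definition gauss_int_obs (s : R) (dx du tau : nat) (o : obs dx du tau)
    (f : obs dx du tau -> \bar R) : \bar R :=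
  gauss_int_blocks s o.1 (fun x => gauss_int_blocks s o.2 (fun u => f (x, u))).

Definition enorm (d : nat) (v : d.-tuple R) : R :=
  Num.sqrt (\sum_(i < d) (tnth v i) ^+ 2).

Definition tsub (d : nat) (v w : d.-tuple R) : d.-tuple R :=
  [tuple tnth v i - tnth w i | i < d].

Definition d_traj (dx du tau : nat) (o o' : obs dx du tau) : R :=
  Num.max (\big[Num.max/0]_(k < tau) enorm (tsub (tnth o.1 k) (tnth o'.1 k)))
          (\big[Num.max/0]_(k < tau.-1) enorm (tsub (tnth o.2 k) (tnth o'.2 k))).

Definition TV (d : measure_display) (A : measurableType d)
    (P Q : set A -> \bar R) : \bar R :=
  ereal_sup [set `|(P B - Q B)%E|%E | B in [set B | measurable B]].

End defs.

(** The smoothed policy: pi_sigma(o) is the law of a ~ pi(o~), o~ ~ N(o, sigma^2 I),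
    i.e. B |-> E_{o~}[pi(o~)(B)]. *)
Definition smoothed {R : realType} (dx du tau : nat) (d : measure_display)
    (A : measurableType d) (pi : R.-pker (@obs R dx du tau) ~> A) (sigma : R)
    (o : obs dx du tau) : set A -> \bar R :=
  fun B => gauss_int_obs sigma o (fun ot => pi ot B).

(* Main.v *)
Require Import Defs.
From HB Require Import structures.
From mathcomp Require Import all_boot all_order all_algebra.
From mathcomp Require Import all_classical all_reals all_analysis.
From mathcomp Require Import measurable_realfun lebesgue_integral_fubini normal_distribution.
From mathcomp Require Import ring lra.
Import Order.TTheory GRing.Theory Num.Theory.
Local Open Scope classical_set_scope.
Local Open Scope ring_scope.

Set Implicit Arguments. Unset Strict Implicit. Unset Printing Implicit Defensive.
Local Open Scope ereal_scope.

Section abs.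
Context {R : realType}.

Definition nnm d (T : measurableType d) (f : T -> \bar R) :=
  measurable_fun setT f /\ forall x, 0 <= f x.

Record GoodE d (T : measurableType d) (E : (T -> \bar R) -> \bar R) : Prop := {
  ge_0 : forall f, nnm f -> 0 <= E f;
  ge_D : forall f g, nnm f -> nnm g -> E (fun x => f x + g x) = E f + E g;
  ge_Z : forall (c : R) f, (0 <= c)%R -> nnm f -> E (fun x => c%:E * f x) = c%:E * E f;
  ge_M : forall f g, nnm f -> nnm g -> (forall x, f x <= g x) -> E f <= E g;
  ge_1 : E (fun _ => 1) = 1;
  ge_P : forall d' (T' : measurableType d') (F : T' * T -> \bar R), nnm F ->
          measurable_fun setT (fun x => E (fun y => F (x, y))) }.

Lemma GoodE_comp d1 d2 d (T1 : measurableType d1) (T2 : measurableType d2)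
  (T : measurableType d) (c : T1 * T2 -> T) (mc : measurable_fun setT c) E1 E2 :
  GoodE E1 -> GoodE E2 ->
  GoodE (fun f => E1 (fun x => E2 (fun y => f (c (x, y))))).
Proof.
move=> [p0 pD pZ pM p1 pP] [q0 qD qZ qM q1 qP].
have sec : forall f : T -> \bar R, nnm f -> forall x, nnm (fun y => f (c (x, y))).
  move=> f [mf f0] x; split => // .
  apply: measurableT_comp => //; apply: measurableT_comp => //.
have outer : forall f : T -> \bar R, nnm f -> nnm (fun x => E2 (fun y => f (c (x, y)))).
  move=> f [mf f0]; split; last by move=> x; apply: q0; apply: sec.
  apply: (qP _ _ (fun p => f (c p))); split => //; exact: measurableT_comp.
split.
- by move=> f hf; apply: p0; apply: outer.
- move=> f g hf hg.
  rewrite -pD; [|exact: outer|exact: outer].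
  by congr E1; apply/funext => x; rewrite qD //; apply: sec.
- move=> a f a0 hf.
  rewrite -pZ //; last exact: outer.
  by congr E1; apply/funext => x; rewrite qZ //; apply: sec.
- move=> f g hf hg fg; apply: pM; [exact: outer|exact: outer|].
  by move=> x; apply: qM; [apply: sec|apply: sec|].
- rewrite (_ : (fun x => E2 (fun _ => 1)) = fun _ => 1) //.
  by apply/funext => x; rewrite q1.
- move=> d' T' F [mF F0].
  pose G := fun (p : T' * T1) => E2 (fun y => F (p.1, c (p.2, y))).
  have hG : nnm G.
    split; last by move=> p; apply: q0; split => //; apply: measurableT_comp => //;
      apply: measurable_fun_pair => //; apply: measurableT_comp => //.
    apply: (qP _ _ (fun q : (T' * T1) * T2 => F (q.1.1, c (q.1.2, q.2)))).
    split => //; apply: measurableT_comp => //; apply: measurable_fun_pair.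
      by apply: measurableT_comp => //.
    apply: measurableT_comp => //; apply: measurable_fun_pair => //.
    by apply: measurableT_comp => //.
  exact: (pP _ _ G hG).
Qed.


Lemma nnm_comp d1 d (T1 : measurableType d1) (T : measurableType d)
  (c : T1 -> T) (f : T -> \bar R) : measurable_fun setT c -> nnm f -> nnm (f \o c).
Proof. move=> mc [mf f0]; split; [exact (measurableT_comp mf mc)|by move=> x; exact: f0]. Qed.

Lemma nnmM d (T : measurableType d) (f : T -> \bar R) (L : T -> R) :
  nnm f -> measurable_fun setT L -> (forall t, 0 <= L t)%R ->
  nnm (fun t => f t * (L t)%:E).
Proof.
move=> [mf f0] mL L0; split.
  by apply: emeasurable_funM => //; exact/measurable_EFinP.
by move=> t; apply: mule_ge0 => //; rewrite lee_fin.
Qed.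

Definition CoM d (T : measurableType d) (Em E0 : (T -> \bar R) -> \bar R) (L : T -> R) :=
  [/\ measurable_fun setT L, (forall t, 0 <= L t)%R &
     forall f, nnm f -> Em f = E0 (fun t => f t * (L t)%:E)].

Definition PG d (T : measurableType d) (Em Em' : (T -> \bar R) -> \bar R) (K : R) :=
  [/\ GoodE Em, GoodE Em' & exists E0 L L', [/\ GoodE E0, CoM Em E0 L, CoM Em' E0 L' &
     forall t, (L t * L' t = K)%R]].

Section comp.
Context d1 d2 d (T1 : measurableType d1) (T2 : measurableType d2)
  (T : measurableType d) (c : T1 * T2 -> T) (p1 : T -> T1) (p2 : T -> T2)
  (mc : measurable_fun setT c) (mp1 : measurable_fun setT p1)
  (mp2 : measurable_fun setT p2)
  (h1 : forall x y, p1 (c (x, y)) = x) (h2 : forall x y, p2 (c (x, y)) = y).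

Definition compE (E1 : (T1 -> \bar R) -> \bar R) (E2 : (T2 -> \bar R) -> \bar R) :=
  fun f : T -> \bar R => E1 (fun x => E2 (fun y => f (c (x, y)))).

Lemma CoM_comp E1m E10 L1 E2m E20 L2 : GoodE E10 -> GoodE E20 ->
  CoM E1m E10 L1 -> CoM E2m E20 L2 ->
  CoM (compE E1m E2m) (compE E10 E20) (fun t => L1 (p1 t) * L2 (p2 t))%R.
Proof.
move=> G1 G2 [mL1 L10 C1] [mL2 L20 C2]; split.
- by apply: measurable_funM; apply: measurableT_comp.
- by move=> t; apply: mulr_ge0.
move=> f hf; rewrite /compE.
have sec : forall x, nnm (fun y => f (c (x, y))).
  move=> x; apply: (nnm_comp (c := fun y => c (x, y))) => //.
  exact: (measurableT_comp mc (pair1_measurable x)).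
transitivity (E1m (fun x => E20 (fun y => f (c (x, y)) * (L2 y)%:E))).
  by congr E1m; apply/funext => x; rewrite C2.
have hF : nnm (fun p : T1 * T2 => f (c p) * (L2 p.2)%:E).
  apply: nnmM => //; first exact: nnm_comp.
  exact: measurableT_comp.
have hO : nnm (fun x => E20 (fun y => f (c (x, y)) * (L2 y)%:E)).
  split; first exact: (ge_P G2 hF).
  by move=> x; apply: (ge_0 G2); exact: (nnm_comp (pair1_measurable x) hF).
rewrite C1 //; congr E10; apply/funext => x.
rewrite muleC -(ge_Z G2) //; last first.
  by exact: (nnm_comp (pair1_measurable x) hF).
congr E20; apply/funext => y; rewrite h1 h2 EFinM.
by rewrite muleCA muleA.
Qed.

Lemma GoodE_compE E1 E2 : GoodE E1 -> GoodE E2 -> GoodE (compE E1 E2).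
Proof. exact: GoodE_comp. Qed.

Lemma PG_comp E1m E1m' K1 E2m E2m' K2 :
  PG E1m E1m' K1 -> PG E2m E2m' K2 ->
  PG (compE E1m E2m) (compE E1m' E2m') (K1 * K2)%R.
Proof.
move=> [G1 G1' [E10 [L1 [L1' [G10 C1 C1' HK1]]]]].
move=> [G2 G2' [E20 [L2 [L2' [G20 C2 C2' HK2]]]]].
split; try exact: GoodE_compE.
exists (compE E10 E20), (fun t => L1 (p1 t) * L2 (p2 t))%R,
  (fun t => L1' (p1 t) * L2' (p2 t))%R; split.
- exact: GoodE_compE.
- exact: CoM_comp.
- exact: CoM_comp.
- by move=> t; rewrite -(HK1 (p1 t)) -(HK2 (p2 t)); ring.
Qed.

End comp.

End abs.

Section r.
Local Open Scope ring_scope.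
Context {R : realType}.

Lemma real_opt (x k : R) : 0 <= k <= 1 ->
  (forall t, 1 <= t -> x <= (t * (1 - k) + (1 + k) / t) / 2) ->
  x <= Num.sqrt (1 - k ^+ 2).
Proof.
move=> /andP[k0 k1] H.
have [k1'|k1'] := ltP k 1.
  set s := Num.sqrt (1 - k ^+ 2).
  have s2 : s ^+ 2 = 1 - k ^+ 2 by rewrite sqr_sqrtr // subr_ge0 expr_le1.
  have s0 : 0 < s by rewrite sqrtr_gt0 subr_gt0 expr_lt1.
  have t1 : 1 <= (1 + k) / s.
    rewrite ler_pdivlMr // mul1r; nra.
  have := H _ t1.
  have -> : ((1 + k) / s * (1 - k) + (1 + k) / ((1 + k) / s)) / 2 = s.
    have sn : s != 0 by rewrite gt_eqF.
    have kn : 1 + k != 0 by rewrite gt_eqF //; lra.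
    have -> : (1 + k) / s * (1 - k) = (1 - k ^+ 2) / s by field.
    rewrite -s2; field.
    by rewrite sn kn.
  done.
have k1e : k = 1 by apply/eqP; rewrite eq_le k1 k1'.
subst k; rewrite expr1n subrr sqrtr0.
rewrite leNgt; apply/negP => x0.
have t1 : 1 <= 1 + x^-1 by rewrite lerDl invr_ge0 ltW.
have := H _ t1; rewrite subrr mulr0 add0r.
have -> : (1 + 1) / (1 + x^-1) / 2 = x / (x + 1).
  have xn : x != 0 by rewrite gt_eqF.
  have x1 : x + 1 != 0 by rewrite gt_eqF //; lra.
  by field; rewrite xn x1.
rewrite ler_pdivlMr; last lra.
nra.
Qed.

Lemma pw_ineq (r L L' k t : R) : 0 <= r <= 1 -> 0 <= L -> 0 <= L' -> 0 <= k ->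
  L * L' = k ^+ 2 -> 1 <= t ->
  r * L + L' / 2 + k * (t - t^-1) / 2 <=
  r * L' + (t + t^-1) / 4 * L + (t + t^-1) / 4 * L' + L / 2.
Proof.
move=> /andP[r0 r1] L0 L'0 k0 LL t1.
set u := Num.sqrt L; set v := Num.sqrt L'.
have hu : L = u ^+ 2 by rewrite sqr_sqrtr.
have hv : L' = v ^+ 2 by rewrite sqr_sqrtr.
have hk : k = u * v by rewrite -sqrtrM // LL sqrtr_sqr ger0_norm.
have tn : t != 0 by rewrite gt_eqF //; lra.
rewrite -subr_ge0.
have -> : r * L' + (t + t^-1) / 4 * L + (t + t^-1) / 4 * L' + L / 2 -
  (r * L + L' / 2 + k * (t - t^-1) / 2) =
  ((1 - r) * (t * (u - v) + (u + v)) ^+ 2 + r * (t * (u - v) - (u + v)) ^+ 2) / (4 * t).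
  by rewrite hu hv hk; field.
apply: divr_ge0; last lra.
apply: addr_ge0; apply: mulr_ge0; rewrite ?sqr_ge0 //; lra.
Qed.
End r.

Section bound.
Context {R : realType}.

Lemma nnm_cst1 d (T : measurableType d) : nnm (fun _ : T => (1 : \bar R)).
Proof. by split => //; exact: measurable_cst. Qed.

Lemma nnmE d (T : measurableType d) (L : T -> R) :
  measurable_fun setT L -> (forall t, 0 <= L t)%R -> nnm (fun t => (L t)%:E).
Proof. by move=> mL L0; split => //; exact/measurable_EFinP. Qed.

Lemma nnmD d (T : measurableType d) (f g : T -> \bar R) :
  nnm f -> nnm g -> nnm (fun x => f x + g x).
Proof.
move=> [mf f0] [mg g0]; split; first exact: emeasurable_funD.
by move=> x; apply: adde_ge0.
Qed.

Lemma nnmZ d (T : measurableType d) (c : R) (f : T -> \bar R) :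
  (0 <= c)%R -> nnm f -> nnm (fun x => c%:E * f x).
Proof.
move=> c0 [mf f0]; split; first exact: emeasurable_funM.
by move=> x; apply: mule_ge0.
Qed.

Lemma PG_sym d (T : measurableType d) (Em Em' : (T -> \bar R) -> \bar R) (K : R) : PG Em Em' K -> PG Em' Em K.
Proof.
move=> [G G' [E0 [L [L' [G0 C C' HK]]]]]; split => //.
by exists E0, L', L; split => // t; rewrite mulrC.
Qed.

Lemma PG_bound d (T : measurableType d) (Em Em' : (T -> \bar R) -> \bar R) (K : R) (f : T -> \bar R) :
  PG Em Em' K -> (0 <= K <= 1)%R -> nnm f -> (forall x, f x <= 1) ->
  exists a b : R, [/\ Em f = a%:E, Em' f = b%:E & (a - b <= Num.sqrt (1 - K))%R].
Proof.
move=> [Gm Gm' [E0 [L [L' [G0 [mL L0 C] [mL' L'0 C'] HK]]]]] /andP[K0 K1] hf f1.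
have hL := nnmE mL L0; have hL' := nnmE mL' L'0.
have E0L : E0 (fun t => (L t)%:E) = 1.
  rewrite -(ge_1 Gm) (C _ (nnm_cst1 _)); congr E0; apply/funext => t.
  by rewrite mul1e.
have E0L' : E0 (fun t => (L' t)%:E) = 1.
  rewrite -(ge_1 Gm') (C' _ (nnm_cst1 _)); congr E0; apply/funext => t.
  by rewrite mul1e.
have fin : forall E, GoodE E -> E f = (fine (E f))%:E.
  move=> E GE; rewrite fineK // ge0_fin_numE; last exact: (ge_0 GE).
  apply: (le_lt_trans (y := 1)); last exact: ltry.
  rewrite -(ge_1 GE); apply: (ge_M GE) => //; exact: nnm_cst1.
exists (fine (Em f)), (fine (Em' f)); split; try exact: fin.
set k := Num.sqrt K.
have k0 : (0 <= k)%R by exact: sqrtr_ge0.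
have kK : (k ^+ 2 = K)%R by rewrite sqr_sqrtr.
rewrite -kK; apply: real_opt; first by rewrite k0 /= -kK expr_le1 //= in K1 *.
move=> t t1.
have tn : (t != 0)%R by rewrite gt_eqF //; lra.
have ti0 : (0 <= t^-1)%R by rewrite invr_ge0; lra.
have ti1 : (t^-1 <= 1)%R by rewrite invf_le1 //; lra.
set al := ((t + t^-1) / 4)%R.
set c := (k * (t - t^-1) / 2)%R.
have al0 : (0 <= al)%R by rewrite /al; apply: divr_ge0; lra.
have c0 : (0 <= c)%R by rewrite /c; apply: divr_ge0 => //; apply: mulr_ge0 => //; lra.
have h2 : (0 <= 2^-1 :> R)%R by rewrite invr_ge0.
have hfL := nnmM hf mL L0; have hfL' := nnmM hf mL' L'0.
have ineq := ge_M G0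
  (f := fun x => f x * (L x)%:E + ((2^-1)%:E * (L' x)%:E + c%:E * 1))
  (g := fun x => f x * (L' x)%:E + (al%:E * (L x)%:E + (al%:E * (L' x)%:E + (2^-1)%:E * (L x)%:E))).
have := ineq; clear ineq.
rewrite !(ge_D G0) ?(ge_Z G0) //; try by repeat (apply: nnmD || apply: nnmZ || assumption || apply: nnm_cst1).
rewrite E0L E0L' (ge_1 G0) -C // -C' // fin // [Em' f]fin //.
rewrite !mule1 -!EFinD lee_fin => H.
have hc : nnm (fun _ : T => c%:E) by split => //; exact: measurable_cst.
have := H (nnmD hfL (nnmD (nnmZ h2 hL') hc))
  (nnmD hfL' (nnmD (nnmZ al0 hL) (nnmD (nnmZ al0 hL') (nnmZ h2 hL)))).
move=> {}H.
have {}H : (fine (Em f) + (2^-1 + c) <= fine (Em' f) + (al + (al + 2^-1)))%R.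
  apply: H => x.
  have fx0 : 0 <= f x by case: hf.
  have fxE : f x = (fine (f x))%:E.
    rewrite fineK // ge0_fin_numE //; exact: (le_lt_trans (f1 x) (ltry _)).
  have r01 : (0 <= fine (f x) <= 1)%R.
    by rewrite -!lee_fin -fxE fx0 f1.
  rewrite fxE -!EFinM -!EFinD lee_fin.
  have := pw_ineq r01 (L0 x) (L'0 x) k0 (etrans (HK x) (esym kK)) t1.
  rewrite /al /c; lra.
have e : ((t * (1 - k) + (1 + k) / t) / 2 = al + al - c)%R.
  by rewrite /al /c; field.
rewrite e; lra.
Qed.

End bound.


Section density.
Context d (T : measurableType d) (R : realType).
Variables (mu nu : {measure set T -> \bar R}) (g : T -> R).
Hypotheses (mg : measurable_fun setT g) (g0 : forall x, (0 <= g x)%R).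
Hypothesis hnu : forall A, measurable A -> nu A = \int[mu]_(x in A) (g x)%:E.

Let density_indic E : measurable E ->
  \int[nu]_x (\1_E x)%:E = \int[mu]_x ((\1_E x)%:E * (g x)%:E).
Proof.
move=> mE; rewrite integral_indic // setIT hnu // integral_mkcond.
apply: eq_integral => x _; rewrite patchE indicE.
by case: ifPn => _; rewrite ?mul1e ?mul0e.
Qed.

Import HBNNSimple.

Let density_nnsfun (h : {nnsfun T >-> R}) :
  \int[nu]_x (h x)%:E = \int[mu]_x ((h x)%:E * (g x)%:E).
Proof.
under [LHS]eq_integral do rewrite fimfunE -fsumEFin//.
rewrite [LHS]ge0_integral_fsum//; last 2 first.
  - by move=> r; exact/measurable_EFinP/measurableT_comp.
  - by move=> n x _; rewrite EFinM nnfun_muleindic_ge0.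
under [RHS]eq_integral.
  move=> x _; rewrite fimfunE -fsumEFin// ge0_mule_fsuml; last first.
    by move=> r; rewrite EFinM nnfun_muleindic_ge0.
  over.
rewrite [RHS]ge0_integral_fsum//; last 2 first.
  - move=> r; apply/emeasurable_funM; last exact/measurable_EFinP.
    by apply/measurable_EFinP; do 2 apply/measurableT_comp => //.
  - move=> n x _; rewrite mule_ge0//; last by rewrite lee_fin.
    by rewrite EFinM nnfun_muleindic_ge0.
apply: eq_fsbigr => r; rewrite inE => -[x0 _ <-].
rewrite integralZl_indic_nnsfun//.
under [RHS]eq_integral do rewrite EFinM -muleA.
rewrite ge0_integralZl//; last 3 first.
  - apply/emeasurable_funM; last exact/measurable_EFinP.
    apply/measurable_EFinP; apply: measurable_indic.
    by rewrite -[X in measurable X]setTI; apply: measurable_funP.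
  - by move=> x _; rewrite mule_ge0// lee_fin.
  - by rewrite lee_fin.
rewrite density_indic //.
Qed.

Lemma integral_density (f : T -> \bar R) : measurable_fun setT f ->
  (forall x, 0 <= f x) ->
  \int[nu]_x f x = \int[mu]_x (f x * (g x)%:E).
Proof.
move=> mf f0.
pose f_ := nnsfun_approx measurableT mf.
transitivity (lim (\int[nu]_x (f_ n x)%:E @[n --> \oo])%E).
  rewrite -monotone_convergence//=.
  - apply: eq_integral => ? /[!inE] xD; apply/esym/cvg_lim => //=.
    exact: cvg_nnsfun_approx.
  - by move=> n; exact/measurable_EFinP/measurable_funTS.
  - by move=> n ? _; rewrite lee_fin.
  - by move=> ? _ ? ? mn; rewrite lee_fin; exact/lefP/nd_nnsfun_approx.
transitivity (lim (\int[mu]_x ((f_ n x)%:E * (g x)%:E) @[n --> \oo])%E).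
  by apply: congr_lim; apply/funext => n /=; exact: density_nnsfun.
rewrite -monotone_convergence//=.
- apply: eq_integral => x _; apply/cvg_lim => //; apply: cvgeZr => //.
  exact: cvg_nnsfun_approx.
- move=> n; apply/emeasurable_funM; apply/measurable_EFinP => //.
- by move=> n x _; rewrite mule_ge0 // lee_fin.
- move=> x _ a b ab; rewrite lee_wpmul2r ?lee_fin //.
  exact/lefP/nd_nnsfun_approx.
Qed.

End density.


Section layers.
Context {R : realType}.

Definition PE d (T : measurableType d) (P : probability T R) :=
  fun f : T -> \bar R => \int[P]_x f x.

Lemma GoodE_prob d (T : measurableType d) (P : probability T R) : GoodE (PE P).
Proof.
split; rewrite /PE.
- by move=> f [mf f0]; apply: integral_ge0 => x _.
- by move=> f g [mf f0] [mg g0]; rewrite ge0_integralD.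
- by move=> c f c0 [mf f0]; rewrite ge0_integralZl // lee_fin.
- by move=> f g [mf f0] [mg g0] fg; apply: ge0_le_integral.
- by rewrite integral_cst // mul1e; apply: probability_setT.
- move=> d' T' F [mF F0].
  exact: (@measurable_fun_fubini_tonelli_F _ _ T' T R P F mF F0).
Qed.

Lemma GoodE_eval d (T : measurableType d) (a : T) : GoodE (fun f : T -> \bar R => f a).
Proof.
split.
- by move=> f [].
- by [].
- by [].
- by move=> f g _ _ fg.
- by [].
- move=> d' T' F [mF F0]; exact: measurable_fun_pair1.
Qed.

Lemma PG_eval d (T : measurableType d) (a : T) :
  PG (fun f : T -> \bar R => f a) (fun f => f a) 1%R.
Proof.
split; try exact: GoodE_eval.
exists (fun f : T -> \bar R => f a), (fun _ => 1%R), (fun _ => 1%R); split.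
- exact: GoodE_eval.
- by split => // f _; rewrite mule1.
- by split => // f _; rewrite mule1.
- by move=> t; rewrite mulr1.
Qed.

Definition Lf (mid del s y : R) : R := expR (((y - mid) * del - del ^+ 2 / 2) / s ^+ 2).

Lemma measurable_Lf mid del s : measurable_fun setT (Lf mid del s).
Proof.
apply: measurableT_comp; first exact: measurable_expR.
apply: measurable_funM => //; apply: measurable_funB => //.
by apply: measurable_funM => //; apply: measurable_funB.
Qed.

Lemma normal_CoM (m mid s : R) : s != 0%R ->
  CoM (PE (normal_prob m s)) (PE (normal_prob mid s)) (Lf mid (m - mid) s).
Proof.
move=> s0; split.
- exact: measurable_Lf.
- by move=> t; exact: expR_ge0.
move=> f [mf f0]; rewrite /PE.
rewrite (@integral_density _ _ _ lebesgue_measure (normal_prob m s) (normal_pdf m s)) //; last 2 first.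
  exact: measurable_normal_pdf.
  by move=> x; exact: normal_pdf_ge0.
rewrite (@integral_density _ _ _ lebesgue_measure (normal_prob mid s) (normal_pdf mid s)) //; last 4 first.
  exact: measurable_normal_pdf.
  by move=> x; exact: normal_pdf_ge0.
  apply: emeasurable_funM => //; apply/measurable_EFinP; exact: measurable_Lf.
  by move=> x; apply: mule_ge0 => //; rewrite lee_fin expR_ge0.
apply: eq_integral => y _; rewrite -muleA -EFinM; congr (_ * _%:E).
rewrite !normal_pdfE // /normal_fun /Lf mulrCA -expRD; congr (_ * expR _)%R.
by field; rewrite s0.
Qed.

Lemma normal_PG (m m' s : R) : s != 0%R ->
  PG (PE (normal_prob m s)) (PE (normal_prob m' s))
     (expR (- (m - m') ^+ 2 / (4 * s ^+ 2))).
Proof.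
move=> s0; split; try exact: GoodE_prob.
set mid := ((m + m') / 2)%R.
exists (PE (normal_prob mid s)), (Lf mid (m - mid) s), (Lf mid (m' - mid) s).
split; try exact: normal_CoM; first exact: GoodE_prob.
move=> t; rewrite /Lf -expRD; congr expR.
by rewrite /mid; field; rewrite s0.
Qed.


Definition sqd n (m m' : n.-tuple R) : R := (\sum_(i < n) (tnth m i - tnth m' i) ^+ 2)%R.

Lemma sqdS n (m m' : n.+1.-tuple R) :
  sqd m m' = ((thead m - thead m') ^+ 2 + sqd (behead_tuple m) (behead_tuple m'))%R.
Proof.
rewrite /sqd big_ord_recl; congr (_ + _)%R.
apply: eq_bigr => i _.
have -> : tnth (behead_tuple m) i = tnth m (inord i.+1) by exact: tnth_behead.
have -> : tnth (behead_tuple m') i = tnth m' (inord i.+1) by exact: tnth_behead.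
by congr ((tnth m _ - tnth m' _) ^+ 2)%R; apply/val_inj; rewrite /= inordK // ltnS.
Qed.

Lemma expR_split (a b s : R) :
  expR (- (a + b) / (4 * s ^+ 2)) = (expR (- a / (4 * s ^+ 2)) * expR (- b / (4 * s ^+ 2)))%R.
Proof. by rewrite -expRD; congr expR; rewrite -mulrDl opprD. Qed.

Lemma gauss_PG (s : R) n (m m' : n.-tuple R) : s != 0%R ->
  PG (gauss_int s m) (gauss_int s m') (expR (- sqd m m' / (4 * s ^+ 2))).
Proof.
move=> s0; elim: n => [|n IH] in m m' *.
  rewrite /sqd big_ord0 oppr0 mul0r expR0; exact: (PG_eval [tuple]).
have N := normal_PG (thead m) (thead m') s0.
have H := PG_comp (T1 := g_sigma_algebraType R.-ocitv.-measurable) (T2 := n.-tuple R) (T := n.+1.-tuple R) (c := fun p => @cons_tuple n R p.1 p.2) (p1 := @thead n R) (p2 := @behead_tuple n.+1 R) _ _ _ _ _ N (IH (behead_tuple m) (behead_tuple m')).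
rewrite sqdS expR_split; apply: H.
- exact: (measurable_cons measurable_fst measurable_snd).
- exact: measurable_tnth.
- exact: measurable_behead.
- by move=> x y; rewrite theadE.
- by move=> x y; apply/val_inj.
Qed.


Lemma sum_tupleS (T : Type) n (F : T -> T -> R) (m m' : n.+1.-tuple T) :
  (\sum_(i < n.+1) F (tnth m i) (tnth m' i) =
   F (thead m) (thead m') + \sum_(i < n) F (tnth (behead_tuple m) i) (tnth (behead_tuple m') i))%R.
Proof.
rewrite big_ord_recl; congr (_ + _)%R.
apply: eq_bigr => i _.
have -> : tnth (behead_tuple m) i = tnth m (inord i.+1) by exact: tnth_behead.
have -> : tnth (behead_tuple m') i = tnth m' (inord i.+1) by exact: tnth_behead.
by congr (F (tnth m _) (tnth m' _)); apply/val_inj; rewrite /= inordK // ltnS.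
Qed.

Definition sqdb d n (m m' : n.-tuple (d.-tuple R)) : R :=
  (\sum_(k < n) sqd (tnth m k) (tnth m' k))%R.

Lemma blocks_PG (s : R) d n (m m' : n.-tuple (d.-tuple R)) : s != 0%R ->
  PG (gauss_int_blocks s m) (gauss_int_blocks s m') (expR (- sqdb m m' / (4 * s ^+ 2))).
Proof.
move=> s0; elim: n => [|n IH] in m m' *.
  rewrite /sqdb big_ord0 oppr0 mul0r expR0; exact: (PG_eval [tuple]).
have N := gauss_PG (thead m) (thead m') s0.
have H := PG_comp (T1 := d.-tuple R) (T2 := n.-tuple (d.-tuple R)) (T := n.+1.-tuple (d.-tuple R)) (c := fun p => @cons_tuple n _ p.1 p.2) (p1 := @thead n _) (p2 := @behead_tuple n.+1 _) _ _ _ _ _ N (IH (behead_tuple m) (behead_tuple m')).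
rewrite /sqdb sum_tupleS expR_split; apply: H.
- exact: (measurable_cons measurable_fst measurable_snd).
- exact: measurable_tnth.
- exact: measurable_behead.
- by move=> x y; rewrite theadE.
- by move=> x y; apply/val_inj.
Qed.

Lemma obs_PG (s : R) dx du tau (o o' : @obs R dx du tau) : s != 0%R ->
  PG (gauss_int_obs s o) (gauss_int_obs s o')
    (expR (- (sqdb o.1 o'.1 + sqdb o.2 o'.2) / (4 * s ^+ 2))).
Proof.
move=> s0.
have H := PG_comp (T1 := tau.-tuple (dx.-tuple R)) (T2 := tau.-1.-tuple (du.-tuple R))
  (T := (tau.-tuple (dx.-tuple R) * tau.-1.-tuple (du.-tuple R))%type)
  (c := fun p => p) (p1 := fst) (p2 := snd) _ _ _ _ _
  (blocks_PG o.1 o'.1 s0) (blocks_PG o.2 o'.2 s0).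
rewrite expR_split; apply: H => //.
Qed.

End layers.

Local Close Scope ereal_scope.
Local Open Scope ring_scope.

Lemma sqd_enorm (R : realType) d (v w : d.-tuple R) : sqd v w = enorm (tsub v w) ^+ 2.
Proof.
rewrite /enorm sqr_sqrtr; last by apply: sumr_ge0 => i _; exact: sqr_ge0.
by apply: eq_bigr => i _; rewrite /tsub tnth_mktuple.
Qed.

Lemma sqdb_le (R : realType) d n (m m' : n.-tuple (d.-tuple R)) (dt : R) :
  (forall k, enorm (tsub (tnth m k) (tnth m' k)) <= dt) ->
  sqdb m m' <= n%:R * dt ^+ 2.
Proof.
move=> H; rewrite /sqdb.
apply: (le_trans (y := \sum_(k < n) dt ^+ 2)).
  apply: ler_sum => k _; rewrite sqd_enorm.
  have e0 : 0 <= enorm (tsub (tnth m k) (tnth m' k)) by exact: sqrtr_ge0.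
  have := H k; nra.
by rewrite sumr_const card_ord mulr_natl.
Qed.

Lemma sqdb_ge0 (R : realType) d n (m m' : n.-tuple (d.-tuple R)) : 0 <= sqdb m m'.
Proof.
by apply: sumr_ge0 => k _; apply: sumr_ge0 => i _; exact: sqr_ge0.
Qed.


Unset Implicit Arguments. Set Strict Implicit.
Local Open Scope classical_set_scope.
Local Open Scope ring_scope.

Theorem lemma1 (R : realType) (dx du tau : nat) (d : measure_display)
    (A : measurableType d) (H : nat)
    (pi : 'I_H -> R.-pker (@obs R dx du tau) ~> A) (sigma : R) :
  (0 < tau)%N -> 0 < sigma ->
  forall (h : 'I_H) (o o' : obs dx du tau),
    (TV (smoothed (pi h) sigma o) (smoothed (pi h) sigma o') <=
     ((Num.sqrt (2 * tau%:R - 1) / (2 * sigma)) * d_traj o o')%:E)%E.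
Proof.
move=> tau0 sig0 h o o'.
have s0 : sigma != 0 by rewrite gt_eqF.
set D := sqdb o.1 o'.1 + sqdb o.2 o'.2.
set K := expR (- D / (4 * sigma ^+ 2)).
have HPG := obs_PG o o' s0.
have HPG' := PG_sym HPG.
have D0 : 0 <= D by apply: addr_ge0; exact: sqdb_ge0.
have s2 : 0 < 4 * sigma ^+ 2 by apply: mulr_gt0 => //; exact: exprn_gt0.
have K01 : 0 <= K <= 1.
  rewrite expR_ge0 /= expR_le1 mulNr oppr_le0; apply: divr_ge0 => //; exact: ltW.
set dt := d_traj o o'.
have dt0 : 0 <= dt.
  by rewrite /dt /d_traj le_max bigmax_ge_id.
set X := Num.sqrt (2 * tau%:R - 1) / (2 * sigma) * dt.
have key : Num.sqrt (1 - K) <= X.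
  have t1 : (1 <= tau%:R :> R) by rewrite ler1n.
  have e : (tau.-1)%:R = tau%:R - 1 :> R by rewrite -{2}(prednK tau0) mulrSr addrK.
  have hx : sqdb o.1 o'.1 <= tau%:R * dt ^+ 2.
    apply: sqdb_le => k; rewrite /dt /d_traj le_max; apply/orP; left.
    exact: le_bigmax.
  have hu : sqdb o.2 o'.2 <= (tau.-1)%:R * dt ^+ 2.
    apply: sqdb_le => k; rewrite /dt /d_traj le_max; apply/orP; right.
    exact: le_bigmax.
  rewrite e in hu.
  have hD : D <= (2 * tau%:R - 1) * dt ^+ 2 by rewrite /D; nra.
  have h1K : 1 - K <= D / (4 * sigma ^+ 2).
    have := expR_ge1Dx (- D / (4 * sigma ^+ 2)); rewrite -/K mulNr; lra.
  have c0 : 0 <= 2 * tau%:R - 1 :> R by lra.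
  have X0 : 0 <= X.
    by rewrite /X; apply: mulr_ge0 => //; apply: divr_ge0; [exact: sqrtr_ge0|lra].
  have X2 : X ^+ 2 = (2 * tau%:R - 1) * dt ^+ 2 / (4 * sigma ^+ 2).
    rewrite /X !exprMn exprVn sqr_sqrtr //.
    have sn : sigma != 0 by [].
    by field; rewrite s0.
  have h2 : 1 - K <= X ^+ 2.
    rewrite X2; apply: (le_trans h1K); apply: ler_wpM2r => //.
    by rewrite invr_ge0 ltW.
  rewrite -(ger0_norm X0) -sqrtr_sqr; exact: ler_wsqrtr.
apply: ub_ereal_sup => _ [B mB <-].
set f := fun ot => pi h ot B.
have hf : nnm f.
  by split; [exact: measurable_kernel | move=> x; exact: measure_ge0].
have f1 : forall x, (f x <= 1)%E.
  move=> x; rewrite -(prob_kernel (s := pi h) x) /f.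
  by apply: le_measure => //; rewrite inE.
have [a [b [Ea Eb ab]]] := PG_bound HPG K01 hf f1.
have [b' [a' [Eb' Ea' ba]]] := PG_bound HPG' K01 hf f1.
have aa : a' = a by apply: EFin_inj; rewrite -Ea -Ea'.
have bb : b' = b by apply: EFin_inj; rewrite -Eb -Eb'.
subst a' b'.
rewrite /smoothed -/f Ea Eb -EFinB /= lee_fin ler_norml.
apply/andP; split; lra.
Qed.
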